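(* Let $X_1, \dots, X_n$ be nonnegative random variables on a probability space $(\Omega, \mathcal{F}, \mathbb{P})$, let $\emptyset \neq \mathcal{S} \subseteq \{1, \dots, n\}$, and let $\mathbf{u} = (u_\lambda : \emptyset \neq \lambda \subseteq \mathcal{S})$ be real thresholds. Let $\emptyset \neq \mu \subseteq \mathcal{S}$ and suppose $u_\mu \geq u_\lambda$ for all $\lambda$ with $\mu \subsetneq \lambda \subseteq \mathcal{S}$. Then for every $\sigma \subseteq \mu$, $$B_\mu(\mathbf{u}) = A_\mu(u_\mu) \cap \bigcap_{\mu \subsetneq \lambda \subseteq \mathcal{S}} \overline{A_{\lambda \setminus \sigma}(u_\lambda)}.$$
   Context: For $\mu \subseteq \mathcal{S}$ and $u \in \mathbb{R}$, $A_\mu(u) := \bigcap_{i \in \mu} \{X_i > u\}$ (with $A_\emptyset(u) = \Omega$). For $\mu \subseteq \mathcal{S}$, $B_\mu(\mathbf{u}) := A_\mu(u_\mu) \cap \bigcap_{\mu \subsetneq \lambda \subseteq \mathcal{S}} \overline{A_\lambda(u_\lambda)}$, where $\overline{E}$ denotes the complement of an event $E$ (and $A_\emptyset(u_\emptyset) := \Omega$). *)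

(* Defs.v *)
From HB Require Import structures.
From mathcomp Require Import all_boot all_order all_algebra.
From mathcomp Require Import all_classical all_reals all_analysis.
Set Implicit Arguments. Unset Strict Implicit. Unset Printing Implicit Defensive.
Import Order.TTheory GRing.Theory Num.Theory.
Local Open Scope classical_set_scope.
Local Open Scope ring_scope.

Definition Aev {T : Type} {R : realType} {n : nat}
  (X : 'I_n -> T -> R) (mu : {set 'I_n}) (c : R) : set T :=
  [set w | forall i, i \in mu -> c < X i w].

Definition Bev {T : Type} {R : realType} {n : nat}
  (X : 'I_n -> T -> R) (S : {set 'I_n}) (u : {set 'I_n} -> R)
  (mu : {set 'I_n}) : set T :=
  Aev X mu (u mu) `&`
  \bigcap_(lam in [set l : {set 'I_n} | (mu \proper l) && (l \subset S)])
     ~` Aev X lam (u lam).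

(* Main.v *)
Require Import Defs.
From HB Require Import structures.
From mathcomp Require Import all_boot all_order all_algebra.
From mathcomp Require Import all_classical all_reals all_analysis.
Import Order.TTheory GRing.Theory Num.Theory.
Local Open Scope classical_set_scope.
Local Open Scope ring_scope.

Theorem lemma15 (d : measure_display) (T : measurableType d) (R : realType)
  (P : probability T R) (n : nat) (X : 'I_n -> {RV P >-> R})
  (Xnn : forall i w, 0 <= X i w)
  (S : {set 'I_n}) (S0 : S != finset.set0)
  (u : {set 'I_n} -> R)
  (mu : {set 'I_n}) (mu0 : mu != finset.set0) (muS : mu \subset S)
  (hu : forall lam : {set 'I_n}, mu \proper lam -> lam \subset S -> u lam <= u mu)
  (sigma : {set 'I_n}) (hsig : sigma \subset mu) :
  Bev (fun i => (X i : T -> R)) S u mu =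
  Aev (fun i => (X i : T -> R)) mu (u mu) `&`
  \bigcap_(lam in [set l : {set 'I_n} | (mu \proper l) && (l \subset S)])
     ~` Aev (fun i => (X i : T -> R)) (lam :\: sigma) (u lam).
Proof.
rewrite /Bev /Aev; apply/seteqP; split => w [HA Hc]; split => // lam Hlam; move: (Hc lam Hlam) => /= Hl.
- move=> HB; apply: Hl => i iL.
  case: (boolP (i \in sigma)) => iS.
  + move/andP: Hlam => [Hp HS].
    apply: (le_lt_trans (hu lam Hp HS)); have := fintype.subsetP hsig i iS. move/HA. done.
  + apply: HB; rewrite finset.in_setD iS iL; reflexivity.
- move=> HB; apply: Hl => i; rewrite finset.in_setD => /andP[_ iL].
  exact: HB.
Qed.
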